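(* Let $\alpha>0$ and $g,h\in\mathbb{R}$ with $h>g$, and put $\gamma=h-g>0$ and $\lambda=1-g$. Assume the generic (nondegenerate) condition: there is no integer $k\geq 0$ with $k\gamma-g=-1$. Let $F_0\in(0,1)$ and $X_0\in\mathbb{R}$, and let $F$ be a differentiable function on an interval $I\ni X_0$ with values in $(0,1)$ satisfying $$\frac{dF}{dX}=\alpha\,(F^g-F^h),\qquad F(X_0)=F_0 .$$ Then for every $X\in I$, writing $F=F(X)$, $$X = X_0+\frac{F^{\lambda}}{\alpha\lambda}\left(1+\frac{\lambda F^{\gamma}}{\gamma}\,\Phi\!\left[F^{\gamma},1,1+\frac{\lambda}{\gamma}\right]\right)-\frac{F_0^{\lambda}}{\alpha\lambda}\left(1+\frac{\lambda F_0^{\gamma}}{\gamma}\,\Phi\!\left[F_0^{\gamma},1,1+\frac{\lambda}{\gamma}\right]\right),$$ where $\Phi$ is Lerch's transcendent. (Under the generic condition $\lambda\neq 0$ and $1+\lambda/\gamma\notin\{0,-1,-2,\dots\}$, so all terms are defined.)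
   Context: Lerch's transcendent is defined by $\Phi[z,s,v]=\sum_{n=0}^{\infty}\frac{z^n}{(v+n)^s}$ for $|z|<1$ and $v\notin\{0,-1,-2,\dots\}$. The differential equation defines the S-distribution: $F$ is the cumulative distribution function, $dF/dX$ the density, and the formula gives the quantile $X$ as a function of the cumulative value $F$. *)

(* Defs.v *)
From Stdlib Require Import Reals.
From Coquelicot Require Import Coquelicot.
Open Scope R_scope.

(* Coquelicot's [Series] is total; it is the true sum when the series
   converges (e.g. |z| < 1 and v not in {0,-1,-2,...}). *)
Definition Lerch (z : R) (s : nat) (v : R) : R :=
  Series (fun n : nat => z ^ n / (v + INR n) ^ s).

Definition Sdist_G (alpha g h u : R) : R :=
  let gam := h - g in
  let lam := 1 - g in
  Rpower u lam / (alpha * lam) *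
  (1 + lam * Rpower u gam / gam * Lerch (Rpower u gam) 1 (1 + lam / gam)).

(* Main.v *)
Require Import Defs.
From Stdlib Require Import Reals Lra.
From Coquelicot Require Import Coquelicot.
Open Scope R_scope.

Definition ca (v : R) (n : nat) : R := / (v + INR n).

Lemma cv_ca v : (forall n, v + INR n <> 0) -> CV_radius (ca v) = 1.
Proof.
  intros Hv.
  replace 1 with (/ 1) by field.
  apply CV_radius_finite_DAlembert.
  - intros n. unfold ca. apply Rinv_neq_0_compat. apply Hv.
  - lra.
  - assert (Hl : is_lim_seq (fun n => 1 - / (v + 1 + INR n)) (1 - 0)).
    { apply is_lim_seq_minus'. apply is_lim_seq_const.
      replace (Finite 0) with (Rbar_inv p_infty) by reflexivity.
      apply is_lim_seq_inv; [|discriminate].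
      eapply is_lim_seq_plus; [apply is_lim_seq_const | apply is_lim_seq_INR|].
      reflexivity. }
    apply is_lim_seq_abs in Hl. simpl in Hl.
    replace 1 with (Rabs (1 - 0)) by (rewrite Rminus_0_r; apply Rabs_R1).
    eapply is_lim_seq_ext; [|exact Hl].
    intros n. unfold ca. f_equal. rewrite S_INR.
    pose proof (Hv n). pose proof (Hv (S n)). rewrite S_INR in H0.
    field. split; lra.
Qed.

Lemma plusR (x y : R) : plus x y = x + y. Proof. reflexivity. Qed.
Lemma scalR (x y : R) : scal x y = x * y. Proof. reflexivity. Qed.
Lemma zeroR : (@zero R_AbelianMonoid) = 0. Proof. reflexivity. Qed.

Lemma ident v z : (forall n, v + INR n <> 0) -> Rabs z < 1 ->
  v * PSeries (ca v) z + z * PSeries (PS_derive (ca v)) z = / (1 - z).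
Proof.
  intros Hv Hz.
  assert (Hr : Rbar_lt (Rabs z) (CV_radius (ca v))) by (rewrite cv_ca; simpl; auto).
  assert (Hr' : Rbar_lt (Rabs z) (CV_radius (PS_derive (ca v)))) by (rewrite CV_radius_derive; auto).
  rewrite <- PSeries_scal, <- PSeries_incr_1.
  rewrite <- PSeries_plus.
  2: { apply ex_pseries_scal. apply Rmult_comm. apply CV_radius_inside; auto. }
  2: { apply ex_pseries_incr_1. apply CV_radius_inside; auto. }
  rewrite (PSeries_ext _ (fun _ => 1)).
  - unfold PSeries. apply is_series_unique.
    eapply is_series_ext; [|apply is_series_geom; auto].
    intros n. simpl. ring.
  - intros n. unfold PS_plus, PS_scal, PS_incr_1, PS_derive, ca.
    rewrite plusR, scalR.
    destruct n as [|m].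
    + pose proof (Hv 0%nat) as H. change (INR 0) with 0 in *.
      change (v * / (v + 0) + 0 = 1). rewrite Rplus_0_r in *. field. auto.
    + pose proof (Hv (S m)) as H. set (t := INR (S m)) in *. field. auto.
Qed.

Lemma Lerch_eq z v : Lerch z 1 v = PSeries (ca v) z.
Proof. unfold Lerch, PSeries. apply Series_ext. intros n. unfold ca. rewrite pow_1. unfold Rdiv. ring. Qed.

Lemma deriv_G alpha g h u : 0 < alpha -> g < h ->
  (~ exists k : nat, INR k * (h - g) - g = -1) -> 0 < u < 1 ->
  is_derive (Sdist_G alpha g h) u (/ (alpha * (Rpower u g - Rpower u h))).
Proof.
  intros Ha Hgh Hk Hu.
  set (v := 1 + (1 - g) / (h - g)).
  assert (Hv : forall n, v + INR n <> 0).
  { intros n E. apply Hk. exists (S n). unfold v in E. rewrite S_INR.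
    assert (h - g <> 0) by lra.
    apply (Rmult_eq_compat_r (h - g)) in E. field_simplify in E; auto. lra. }
  set (L := PSeries (ca v)).
  apply is_derive_ext with (f := fun x => exp ((1-g) * ln x) / (alpha * (1-g)) *
     (1 + (1-g) * exp ((h-g) * ln x) / (h-g) * L (exp ((h-g) * ln x)))).
  { intros t. unfold Sdist_G, Rpower. rewrite Lerch_eq. reflexivity. }
  assert (Hlnu : ln u < 0) by (rewrite <- ln_1; apply ln_increasing; lra).
  set (z := exp ((h - g) * ln u)).
  assert (Hz0 : 0 < z) by apply exp_pos.
  assert (Hz1 : z < 1).
  { unfold z. rewrite <- exp_0. apply exp_increasing. nra. }
  assert (Hzabs : Rabs z < 1) by (rewrite Rabs_pos_eq; lra).
  assert (Hr : Rbar_lt (Rabs z) (CV_radius (ca v))) by (rewrite cv_ca; simpl; auto).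
  assert (HD := is_derive_PSeries _ _ Hr).
  assert (HI := ident v z Hv Hzabs).
  auto_derive.
  { repeat split; try lra. exists (PSeries (PS_derive (ca v)) z). exact HD. }
  change (exp ((h - g) * ln u)) with z.
  replace (Derive (fun x : R => L x) z) with (PSeries (PS_derive (ca v)) z) by (symmetry; apply is_derive_unique; exact HD).
  fold L. fold L in HI.
  set (D := PSeries (PS_derive (ca v)) z) in *.
  set (E := exp (g * ln u)).
  assert (HE : 0 < E) by apply exp_pos.
  assert (Hp : exp ((1 - g) * ln u) = u / E).
  { unfold E. replace ((1 - g) * ln u) with (ln u + - (g * ln u)) by ring. rewrite exp_plus, exp_Ropp, exp_ln by lra. reflexivity. }
  assert (Hh : Rpower u h = E * z).
  { unfold Rpower, E, z. rewrite <- exp_plus. f_equal. ring. }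
  assert (Hg : Rpower u g = E) by reflexivity.
  rewrite Hh, Hg, Hp.
  assert (HDz : D = (/ (1 - z) - v * L z) / z).
  { rewrite <- HI. field. lra. }
  rewrite HDz. unfold v.
  assert (Hl : 1 - g <> 0).
  { intros E0. apply Hk. exists 0%nat. simpl. lra. }
  field. repeat split; try lra. intro E0. assert (E * (1 - z) = 0) by lra. apply Rmult_integral in H. lra.
Qed.
Lemma between_in (a b : Rbar) (x y c : R) : Rbar_lt a x -> Rbar_lt x b -> Rbar_lt a y -> Rbar_lt y b ->
  Rmin x y <= c <= Rmax x y -> Rbar_lt a c /\ Rbar_lt c b.
Proof.
  intros H1 H2 H3 H4 H5. unfold Rmin, Rmax in H5.
  destruct a as [a| |], b as [b| |]; simpl in *; destruct (Rle_dec x y); try contradiction; repeat split; lra.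
Qed.

Lemma deriv_one alpha g h (a b : Rbar) (F : R -> R) (x : R) : 0 < alpha -> g < h ->
  (~ exists k : nat, INR k * (h - g) - g = -1) ->
  (forall x : R, Rbar_lt a x -> Rbar_lt x b -> 0 < F x < 1) ->
  (forall x : R, Rbar_lt a x -> Rbar_lt x b ->
     is_derive F x (alpha * (Rpower (F x) g - Rpower (F x) h))) ->
  Rbar_lt a x -> Rbar_lt x b ->
  is_derive (fun t => Sdist_G alpha g h (F t) - t) x 0.
Proof.
  intros Ha Hgh Hk HF HD Hax Hxb.
  pose proof (HF x Hax Hxb) as Hu.
  assert (Hne : alpha * (Rpower (F x) g - Rpower (F x) h) <> 0).
  { assert (ln (F x) < 0) by (rewrite <- ln_1; apply ln_increasing; lra).
    assert (Rpower (F x) h < Rpower (F x) g).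
    { unfold Rpower. apply exp_increasing. nra. }
    apply Rgt_not_eq. apply Rmult_gt_0_compat; lra. }
  replace 0 with (alpha * (Rpower (F x) g - Rpower (F x) h) * / (alpha * (Rpower (F x) g - Rpower (F x) h)) - 1)
    by (rewrite Rinv_r; [ring|exact Hne]).
  apply (is_derive_minus (fun t => Sdist_G alpha g h (F t)) (fun t => t)).
  - apply (is_derive_comp (Sdist_G alpha g h) F x).
    + apply deriv_G; auto.
    + apply HD; auto.
  - exact (@is_derive_id R_AbsRing x).
Qed.

Theorem mainTheorem1
  (alpha g h : R) (F0 X0 : R) (a b : Rbar) (F : R -> R) :
  0 < alpha ->
  g < h ->
  (~ exists k : nat, INR k * (h - g) - g = -1) ->
  0 < F0 < 1 ->
  Rbar_lt a X0 -> Rbar_lt X0 b ->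
  (forall x : R, Rbar_lt a x -> Rbar_lt x b -> 0 < F x < 1) ->
  (forall x : R, Rbar_lt a x -> Rbar_lt x b ->
     is_derive F x (alpha * (Rpower (F x) g - Rpower (F x) h))) ->
  F X0 = F0 ->
  forall X : R, Rbar_lt a X -> Rbar_lt X b ->
    X = X0 + Sdist_G alpha g h (F X) - Sdist_G alpha g h F0.
Proof.
  intros Ha Hgh Hk HF0 HaX0 HX0b HF HD HX0 X HaX HXb.
  destruct (MVT_gen (fun t => Sdist_G alpha g h (F t) - t) X0 X (fun _ => 0)) as [c [_ Hc]].
  - intros x Hx. destruct (between_in a b X0 X x) as [H1 H2]; auto; try lra.
    apply (deriv_one alpha g h a b F x); auto.
  - intros x Hx. destruct (between_in a b X0 X x) as [H1 H2]; auto.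
    apply continuity_pt_filterlim. apply (@ex_derive_continuous R_AbsRing R_NormedModule (fun t => Sdist_G alpha g h (F t) - t)).
    exists 0. apply (deriv_one alpha g h a b F x); auto.
  - rewrite HX0 in Hc. lra.
Qed.
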